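(* Let $\mathcal F$ be a proper filter on $\omega$. The game $\mathfrak G(\mathrm{Fr},[\omega]^{<\omega},\mathcal F^* )$ is equivalent to $\mathfrak G(\mathrm{Fr},\omega,\mathcal F^* )$ (a player has a winning strategy in one iff the same player has one in the other). Consequently the game $\mathfrak G(\mathrm{Fr},[\omega]^{<\omega},\mathcal F^* )$ is determined, and player I has a winning strategy iff $\mathcal F=\mathrm{Fr}$ iff player II has no winning strategy.
   Context: A filter on $\omega$ is a family $\mathcal F\subseteq\mathcal P(\omega)$ closed under finite intersections and supersets and containing all cofinite sets; it is proper if all its members are infinite. $\mathcal F^+=\{X:\omega\setminus X\notin\mathcal F\}$, $\mathcal F^*=\mathcal P(\omega)\setminus\mathcal F^+$. $\mathrm{Fr}$ is the family of cofinite subsets of $\omega$. Game $\mathfrak G(\mathcal X,\omega,\mathcal Z)$: at each stage $k$, I chooses $X_k\in\mathcal X$ and II responds with $n_k\in X_k$; II wins if $\{n_k:k\in\omega\}\in\mathcal Z$. Game $\mathfrak G(\mathcal X,[\omega]^{<\omega},\mathcal Z)$: at each stage $k$, I chooses $X_k\in\mathcal X$ and II responds with a nonempty finite $s_k\subseteq X_k$; II wins if $\bigcup_k s_k\in\mathcal Z$. In each game, I wins when II does not. *)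

(* Defs.v *)
From Stdlib Require Import List Arith.
Import ListNotations.
Set Implicit Arguments.

Definition subset := nat -> Prop.
Definition family := subset -> Prop.

Definition cofinite (X : subset) : Prop := exists N, forall n, N <= n -> X n.
Definition finite_set (X : subset) : Prop := exists N, forall n, X n -> n < N.
Definition infinite_set (X : subset) : Prop := ~ finite_set X.

Definition Fr : family := cofinite.

(* filter on omega (in the paper's sense: contains all cofinite sets) *)
Definition is_filter (F : family) : Prop :=
  (forall X Y, F X -> F Y -> F (fun n => X n /\ Y n)) /\
  (forall X Y, F X -> (forall n, X n -> Y n) -> F Y) /\
  (forall X, cofinite X -> F X).

Definition proper_filter (F : family) : Prop :=
  is_filter F /\ forall X, F X -> infinite_set X.

(* F^+ = {X : omega \ X notin F},  F^* = P(omega) \ F^+ = {X : omega \ X in F} *)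
Definition Fplus (F : family) : family := fun X => ~ F (fun n => ~ X n).
Definition Fstar (F : family) : family := fun X => ~ Fplus F X.

Definition same_family (F G : family) : Prop := forall X, F X <-> G X.

Definition pre (A : Type) (f : nat -> A) (k : nat) : list A := map f (seq 0 k).

(* Strategy of I: from the list of II's previous moves, a set.
   Strategy of II: from the list of I's moves so far (latest last), a number. *)

Definition I_wins_pt (Xf Z : family) : Prop :=
  exists sigma : list nat -> subset,
    (forall h, Xf (sigma h)) /\
    forall r : nat -> nat,
      (forall k, sigma (pre r k) (r k)) ->
      ~ Z (fun m => exists k, r k = m).

Definition II_wins_pt (Xf Z : family) : Prop :=
  exists tau : list subset -> nat,
    forall Xs : nat -> subset,
      (forall k, Xf (Xs k)) ->
      (forall k, Xs k (tau (pre Xs (S k)))) /\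
      Z (fun m => exists k, tau (pre Xs (S k)) = m).

(* II's moves are nonempty finite sets, represented as nonempty lists. *)

Definition I_wins_fin (Xf Z : family) : Prop :=
  exists sigma : list (list nat) -> subset,
    (forall h, Xf (sigma h)) /\
    forall r : nat -> list nat,
      (forall k, r k <> [] /\ forall m, In m (r k) -> sigma (pre r k) m) ->
      ~ Z (fun m => exists k, In m (r k)).

Definition II_wins_fin (Xf Z : family) : Prop :=
  exists tau : list subset -> list nat,
    forall Xs : nat -> subset,
      (forall k, Xf (Xs k)) ->
      (forall k, tau (pre Xs (S k)) <> [] /\
                 forall m, In m (tau (pre Xs (S k))) -> Xs k m) /\
      Z (fun m => exists k, In m (tau (pre Xs (S k)))).

(* Main.v *)
Require Import Defs.
From Stdlib Require Import List Arith.
From Stdlib Require Import Classical ClassicalEpsilon Lia.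
Import ListNotations.

Lemma key (F : family) (HF : proper_filter F) :
  ~ same_family F Fr -> exists A, infinite_set A /\ Fstar F A.
Proof.
  intros Hn. destruct HF as [[Hm [Hu Hc]] Hp].
  assert (exists X, F X /\ ~ cofinite X) as [X [HX HnX]].
  { apply NNPP; intro H. apply Hn; intro X; split.
    - intro HX. apply NNPP; intro H2. apply H; exists X; auto.
    - apply Hc. }
  exists (fun n => ~ X n); split.
  - intros [N HN]. apply HnX. exists N. intros n Hn'.
    apply NNPP; intro H. specialize (HN n H). lia.
  - intro H. apply H. apply Hu with X; auto.
Qed.

Lemma meet (A Y : subset) : infinite_set A -> cofinite Y -> exists n, A n /\ Y n.
Proof.
  intros HA [N HN]. apply NNPP; intro H. apply HA. exists N.
  intros n Hn. destruct (le_lt_dec N n) as [h|h]; auto.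
  exfalso; apply H; exists n; auto.
Qed.

Lemma Fstar_mono (F : family) (HF : proper_filter F) (A S : subset) :
  Fstar F A -> (forall n, S n -> A n) -> Fstar F S.
Proof.
  destruct HF as [[Hm [Hu Hc]] Hp].
  intros HA HS H. apply HA. intro HFA. apply H.
  apply Hu with (fun n => ~ A n); auto.
Qed.

Lemma unb_notstar (F : family) (S : subset) :
  same_family F Fr -> (forall N, exists n, N <= n /\ S n) -> ~ Fstar F S.
Proof.
  intros Hs Hub H. apply H. intro HF. apply Hs in HF. destruct HF as [N HN].
  destruct (Hub N) as [n [h1 h2]]. exact (HN n h1 h2).
Qed.

Lemma pre_S (T : Type) (f : nat -> T) k : pre f (S k) = pre f k ++ [f k].
Proof. unfold pre. rewrite seq_S, map_app. reflexivity. Qed.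

Lemma pre_len (T : Type) (f : nat -> T) k : length (pre f k) = k.
Proof. unfold pre. rewrite length_map, length_seq. reflexivity. Qed.

Lemma pre_last (T : Type) (f : nat -> T) k d : last (pre f (S k)) d = f k.
Proof. rewrite pre_S. apply last_last. Qed.

Fixpoint build {T : Type} (c : list T -> T) (k : nat) : list T :=
  match k with 0 => [] | S k => build c k ++ [c (build c k)] end.

Lemma build_pre (T : Type) (c : list T -> T) k :
  pre (fun j => c (build c j)) k = build c k.
Proof.
  induction k; [reflexivity|]. rewrite pre_S, IHk. reflexivity.
Qed.

Lemma ne_in (l : list nat) : l <> [] -> exists m, In m l.
Proof. destruct l as [|m l]; [congruence|]. intros _. exists m; left; auto. Qed.

Section S.
Variable F : family.
Hypothesis HF : proper_filter F.

Lemma Iwpt : same_family F Fr -> I_wins_pt Fr (Fstar F).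
Proof.
  intro Hs. exists (fun h n => length h <= n). split.
  - intro h. exists (length h); auto.
  - intros r Hr. apply unb_notstar; auto. intro N. exists (r N).
    specialize (Hr N). rewrite pre_len in Hr. split; eauto.
Qed.

Lemma Iwfin : same_family F Fr -> I_wins_fin Fr (Fstar F).
Proof.
  intro Hs. exists (fun h n => length h <= n). split.
  - intro h. exists (length h); auto.
  - intros r Hr. apply unb_notstar; auto. intro N.
    destruct (Hr N) as [Hne Hin]. destruct (r N) as [|m l] eqn:E; [congruence|].
    exists m. specialize (Hin m (or_introl eq_refl)). rewrite pre_len in Hin.
    split; auto. exists N. rewrite E. left; auto.
Qed.

Lemma nIIpt : same_family F Fr -> ~ II_wins_pt Fr (Fstar F).
Proof.
  intros Hs [tau Ht]. destruct (Ht (fun k n => k <= n)) as [H1 H2].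
  - intro k. exists k; auto.
  - revert H2. apply unb_notstar; auto. intro N. eexists; split; [apply (H1 N)|eauto].
Qed.

Lemma nIIfin : same_family F Fr -> ~ II_wins_fin Fr (Fstar F).
Proof.
  intros Hs [tau Ht]. destruct (Ht (fun k n => k <= n)) as [H1 H2].
  - intro k. exists k; auto.
  - revert H2. apply unb_notstar; auto. intro N.
    destruct (H1 N) as [Hne Hin].
    destruct (ne_in _ Hne) as [m Hm].
    exists m. split; [apply Hin; exact Hm|]. exists N. exact Hm.
Qed.

Lemma IIpt : ~ same_family F Fr -> II_wins_pt Fr (Fstar F).
Proof.
  intro Hn. destruct (key F HF Hn) as [A [HA HsA]].
  exists (fun l => epsilon (inhabits 0) (fun n => A n /\ last l (fun _ => True) n)).
  intros Xs HX.
  assert (Hk : forall k, A (epsilon (inhabits 0) (fun n => A n /\ last (pre Xs (S k)) (fun _ => True) n))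
                    /\ Xs k (epsilon (inhabits 0) (fun n => A n /\ last (pre Xs (S k)) (fun _ => True) n))).
  { intro k. rewrite pre_last. apply epsilon_spec. apply meet; [exact HA | apply HX]. }
  split.
  - intro k. apply Hk.
  - apply Fstar_mono with A; auto. intros n [k Hk']. subst. apply Hk.
Qed.

Lemma IIfin : ~ same_family F Fr -> II_wins_fin Fr (Fstar F).
Proof.
  intro Hn. destruct (key F HF Hn) as [A [HA HsA]].
  exists (fun l => [epsilon (inhabits 0) (fun n => A n /\ last l (fun _ => True) n)]).
  intros Xs HX.
  assert (Hk : forall k, A (epsilon (inhabits 0) (fun n => A n /\ last (pre Xs (S k)) (fun _ => True) n))
                    /\ Xs k (epsilon (inhabits 0) (fun n => A n /\ last (pre Xs (S k)) (fun _ => True) n))).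
  { intro k. rewrite pre_last. apply epsilon_spec. apply meet; [exact HA | apply HX]. }
  split.
  - intro k. split; [discriminate|]. intros m [<-|[]]. apply Hk.
  - apply Fstar_mono with A; auto. intros n [k [<-|[]]]. apply Hk.
Qed.

Lemma nIpt : ~ same_family F Fr -> ~ I_wins_pt Fr (Fstar F).
Proof.
  intro Hn. destruct (key F HF Hn) as [A [HA HsA]]. intros [sigma [Hs Hw]].
  set (c := fun h => epsilon (inhabits 0) (fun n => A n /\ sigma h n)).
  assert (Hc : forall h, A (c h) /\ sigma h (c h)).
  { intro h. apply epsilon_spec. apply meet; [exact HA | apply Hs]. }
  apply (Hw (fun j => c (build c j))).
  - intro k. rewrite build_pre. apply Hc.
  - apply Fstar_mono with A; auto. intros n [k <-]. apply Hc.
Qed.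

Lemma nIfin : ~ same_family F Fr -> ~ I_wins_fin Fr (Fstar F).
Proof.
  intro Hn. destruct (key F HF Hn) as [A [HA HsA]]. intros [sigma [Hs Hw]].
  set (c0 := fun h => epsilon (inhabits 0) (fun n => A n /\ sigma h n)).
  assert (Hc : forall h, A (c0 h) /\ sigma h (c0 h)).
  { intro h. apply epsilon_spec. apply meet; [exact HA | apply Hs]. }
  set (c := fun h => [c0 h]).
  apply (Hw (fun j => c (build c j))).
  - intro k. rewrite build_pre. split; [discriminate|]. intros m [<-|[]]. apply Hc.
  - apply Fstar_mono with A; auto. intros n [k [<-|[]]]. apply Hc.
Qed.
End S.

Theorem theorem2p14 (F : family) (HF : proper_filter F) :
  ((I_wins_fin Fr (Fstar F) <-> I_wins_pt Fr (Fstar F)) /\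
   (II_wins_fin Fr (Fstar F) <-> II_wins_pt Fr (Fstar F))) /\
  (I_wins_fin Fr (Fstar F) \/ II_wins_fin Fr (Fstar F)) /\
  ((I_wins_fin Fr (Fstar F) <-> same_family F Fr) /\
   (same_family F Fr <-> ~ II_wins_fin Fr (Fstar F))).
Proof.
  destruct (classic (same_family F Fr)) as [H|H].
  - first [pose proof (Iwpt F HF H) | pose proof (Iwpt F H)]. first [pose proof (Iwfin F HF H) | pose proof (Iwfin F H)]. first [pose proof (nIIpt F HF H) | pose proof (nIIpt F H)]. first [pose proof (nIIfin F HF H) | pose proof (nIIfin F H)].
    tauto.
  - first [pose proof (IIpt F HF H) | pose proof (IIpt F H)]. first [pose proof (IIfin F HF H) | pose proof (IIfin F H)]. first [pose proof (nIpt F HF H) | pose proof (nIpt F H)]. first [pose proof (nIfin F HF H) | pose proof (nIfin F H)].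
    tauto.
Qed.
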